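(* Let $\mathcal{T}$ be a tangle of order $k$ in a connectivity system $(E,\lambda)$. Let $X$ be a $\mathcal{T}$-strong $k$-separating set, and let $\mathcal{F}$ be the set of fully closed $k$-separating sets that contain $X$. Then $\bigcap \mathcal{F}$ is a fully closed $k$-separating set that contains $X$.
   Context: A connectivity system is a pair $(E,\lambda)$ with $E$ finite and $\lambda$ an integer-valued symmetric ($\lambda(X)=\lambda(E-X)$) submodular function on subsets of $E$. $X$ is $k$-separating if $\lambda(X)\le k$. A tangle of order $k$ is a collection $\mathcal T$ of subsets of $E$ with (T1) $\lambda(A)<k$ for $A\in\mathcal T$; (T2) if $\lambda(A)\le k-1$ then $A\in\mathcal T$ or $E-A\in\mathcal T$; (T3) $A\cup B\cup C\ne E$ for $A,B,C\in\mathcal T$; (T4) $E-\{e\}\notin\mathcal T$ for $e\in E$. A set is $\mathcal T$-weak if contained in a member of $\mathcal T$, and $\mathcal T$-strong otherwise. A $\mathcal T$-strong $k$-separating set $X$ is fully closed if $X\cup Y$ is not $k$-separating for every nonempty $\mathcal T$-weak $Y\subseteq E-X$. *)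

(* Defs.v *)
From mathcomp Require Import all_boot all_order all_algebra.
Set Implicit Arguments. Unset Strict Implicit. Unset Printing Implicit Defensive.
Import Order.TTheory GRing.Theory Num.Theory.
Local Open Scope ring_scope.

(* A connectivity system (E, lambda): E a finite type (the ground set is
   [set: E]), lambda an integer-valued symmetric submodular function. *)
Definition symmetric_fn (E : finType) (lambda : {set E} -> int) : Prop :=
  forall X : {set E}, lambda X = lambda (~: X).

Definition submodular_fn (E : finType) (lambda : {set E} -> int) : Prop :=
  forall X Y : {set E}, lambda (X :|: Y) + lambda (X :&: Y) <= lambda X + lambda Y.

Definition connectivity_system (E : finType) (lambda : {set E} -> int) : Prop :=
  symmetric_fn lambda /\ submodular_fn lambda.

Definition k_separating (E : finType) (lambda : {set E} -> int) (k : int)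
  (X : {set E}) : Prop := lambda X <= k.

Definition tangle (E : finType) (lambda : {set E} -> int) (k : int)
  (T : {set {set E}}) : Prop :=
  [/\ (forall A, A \in T -> lambda A < k),
      (forall A, lambda A <= k - 1 -> A \in T \/ ~: A \in T),
      (forall A B C, A \in T -> B \in T -> C \in T -> A :|: B :|: C != setT)
    & (forall e : E, ~: [set e] \notin T)].

Definition T_weak (E : finType) (T : {set {set E}}) (Y : {set E}) : bool :=
  [exists A in T, Y \subset A].

Definition T_strong (E : finType) (T : {set {set E}}) (Y : {set E}) : bool :=
  ~~ T_weak T Y.

Definition fully_closed (E : finType) (lambda : {set E} -> int) (k : int)
  (T : {set {set E}}) (X : {set E}) : bool :=
  [&& T_strong T X, lambda X <= k &
      [forall Y : {set E}, [&& Y != set0, T_weak T Y & Y \subset ~: X] ==>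
        ~~ (lambda (X :|: Y) <= k)]].

(* Main.v *)
Require Import Defs.
From mathcomp Require Import all_boot all_order all_algebra.
From mathcomp Require Import zify.
Import Order.TTheory GRing.Theory Num.Theory.
Local Open Scope ring_scope.

Lemma weak_sub (E : finType) (T : {set {set E}}) (Y Y' : {set E}) :
  T_weak T Y -> Y' \subset Y -> T_weak T Y'.
Proof.
move=> /existsP [B /andP [HB HYB]] HY'; apply/existsP; exists B.
by rewrite HB (subset_trans HY' HYB).
Qed.

Lemma lam0 (E : finType) (lambda : {set E} -> int) (Z : {set E}) :
  connectivity_system lambda -> lambda setT <= lambda Z.
Proof.
move=> [Hs Hm]; have := Hm Z (~: Z).
rewrite setUCr setICr -(Hs Z) (Hs setT) setCT; lia.
Qed.

Lemma key (E : finType) (lambda : {set E} -> int) (k : int)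
  (T : {set {set E}}) (Z W Y : {set E}) :
  connectivity_system lambda -> tangle lambda k T ->
  fully_closed lambda k T Z -> W \subset Z -> T_strong T W ->
  T_weak T Y -> lambda (W :|: Y) <= k -> Y \subset Z.
Proof.
move=> Hc Ht HZ HWZ HW HY HWY.
have Hc' := Hc; case: Hc' => Hs Hm.
case: Ht => T1 T2 _ _.
case/and3P: HZ => HZs HZk /forallP HZf.
have [ZT|ZnT] := eqVneq Z setT; first by rewrite ZT subsetT.
case: (boolP (Y \subset Z)) => // /negP HnY; exfalso.
set Y' := Y :\: Z.
have HY'0 : Y' != set0.
  apply/negP => /eqP H0; apply: HnY; apply/subsetP => x Hx.
  apply/negPn/negP => Hxz.
  have : x \in Y' by rewrite !inE Hxz Hx.
  by rewrite H0 inE.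
have HY'w : T_weak T Y' by apply: weak_sub HY _; apply: subsetDl.
have HY'c : Y' \subset ~: Z by apply/subsetP => x; rewrite !inE => /andP[].
have := HZf Y'; rewrite HY'0 HY'w HY'c /= => HU.
have EU : Z :|: Y' = Z :|: (W :|: Y).
  apply/setP => x; rewrite !inE.
  case Hxz: (x \in Z) => //=.
  have Hxw : x \in W = false.
    by apply/negP => Hxw; move/subsetP: HWZ => /(_ x Hxw); rewrite Hxz.
  rewrite Hxw /=. by case: (x \in Y).
rewrite EU in HU.
have Hsub := Hm Z (W :|: Y).
set A := Z :&: (W :|: Y) in Hsub.
have HA : lambda A <= k - 1 by lia.
case: (T2 A HA) => HAT.
- move/negP: HW; apply; apply/existsP; exists A; rewrite HAT /=.
  by rewrite subsetI HWZ subsetUl.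
- have : T_weak T (~: Z).
    apply/existsP; exists (~: A); rewrite HAT /=.
    by rewrite setCS subsetIl.
  have Zne : ~: Z != set0 by apply: contra_neq ZnT => H; rewrite -(setCK Z) H setC0.
  move/(_ (~: Z)): HZf; rewrite Zne subxx andbT /= => H1 H2.
  move: (implyP H1 H2); rewrite setUCr.
  have := @lam0 _ _ Z Hc; lia.
Qed.

Lemma grow (E : finType) (lambda : {set E} -> int) (k : int)
  (T : {set {set E}}) (X : {set E}) (n : nat) :
  connectivity_system lambda -> tangle lambda k T ->
  forall W : {set E}, (#|~: W| <= n)%N -> T_strong T W -> lambda W <= k ->
  (forall Z, fully_closed lambda k T Z -> X \subset Z -> W \subset Z) ->
  exists W', [/\ fully_closed lambda k T W', W \subset W' &
    (forall Z, fully_closed lambda k T Z -> X \subset Z -> W' \subset Z)].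
Proof.
move=> Hc Ht; elim: n => [|n IH] W Hn HWs HWk HWZ.
  case: (boolP (fully_closed lambda k T W)) => HF; first by exists W; split.
  exfalso; move: HF; rewrite /fully_closed HWs HWk /=.
  move/forallPn => [Y]; rewrite negb_imply => /andP [/and3P [HY0 _ HYc] _].
  move: Hn; rewrite leqn0 cards_eq0 => /eqP HC.
  by move: HYc; rewrite HC subset0 => /eqP HY; rewrite HY eqxx in HY0.
case: (boolP (fully_closed lambda k T W)) => HF; first by exists W; split.
move: HF; rewrite /fully_closed HWs HWk /=.
move/forallPn => [Y]; rewrite negb_imply => /andP [/and3P [HY0 HYw HYc] HWY].
rewrite negbK in HWY.
have HWY' : W :|: Y \subset W :|: Y by [].
have [W' [H1 H2 H3]] : exists W', [/\ fully_closed lambda k T W', W :|: Y \subset W' &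
    (forall Z, fully_closed lambda k T Z -> X \subset Z -> W' \subset Z)].
  apply: IH => //.
  - have Hp : ~: (W :|: Y) \proper ~: W.
      rewrite properEneq setCS subsetUl andbT.
      apply/negP => /eqP Heq.
      have /set0Pn [y Hy] := HY0.
      have : y \in ~: W by move/subsetP: HYc; apply.
      by rewrite -Heq !inE Hy orbT.
    have := proper_card Hp; lia.
  - apply/negP => Hw; move/negP: HWs; apply; apply: weak_sub Hw _; exact: subsetUl.
  - move=> Z HZ HXZ; rewrite subUset HWZ //=.

    exact: (@key _ _ _ _ _ _ _ Hc Ht HZ (HWZ Z HZ HXZ) HWs HYw HWY).
exists W'; split => //; apply: subset_trans H2; exact: subsetUl.
Qed.

Theorem corollary3p2 (E : finType) (lambda : {set E} -> int) (k : int)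
  (T : {set {set E}}) (X : {set E}) :
  connectivity_system lambda ->
  tangle lambda k T ->
  T_strong T X -> k_separating lambda k X ->
  let F := [set Z : {set E} | fully_closed lambda k T Z && (X \subset Z)] in
  fully_closed lambda k T (\bigcap_(Z in F) Z) /\ X \subset \bigcap_(Z in F) Z.
Proof.
move=> Hc Ht HXs HXk F.
have [W' [H1 H2 H3]] := @grow E lambda k T X #|~: X| Hc Ht X (leqnn _) HXs HXk
  (fun Z _ HXZ => HXZ).
have Heq : \bigcap_(Z in F) Z = W'.
  apply/eqP; rewrite eqEsubset; apply/andP; split.
    by apply: bigcap_inf; rewrite inE H1 H2.
  by apply/bigcapsP => Z; rewrite inE => /andP [HZ HXZ]; apply: H3.
by rewrite Heq.
Qed.
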